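(* Let $\phi$ be the Fox function. (1) For every odd $l\ge 1$ and every integer $k>l/2$, $\phi(l,2k)=0$. (2) For every even $l\ge 0$ and every integer $k\ge l/2$, $\phi(l,2k)=\phi(l,2k+1)$. (3) For every even $l\ge 0$ and every integer $k\ge l/2$, $\phi(l+1,2k+1)=-\phi(l,2k+1)$.
   Context: For integers $0\le l\le k$, the Fox function is $\phi(l,k)=\sum_{\mathbf a}(-1)^{w(\mathbf a)+(l-1)}$, where the sum runs over all $l$-element subsets $\mathbf a\subseteq\{1,\dots,k\}$, $\mathbf b=\{1,\dots,k\}\setminus\mathbf a$, and $w(\mathbf a)$ is the number of pairs $(i,j)$ with $i\in\mathbf a$, $j\in\mathbf b$ and $j<i$. *)

(* Defs.v *)
From mathcomp Require Import all_boot all_order all_algebra.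
Set Implicit Arguments. Unset Strict Implicit. Unset Printing Implicit Defensive.
Import GRing.Theory Num.Theory.
Local Open Scope ring_scope.

(* The ground set {1,...,k} is represented by 'I_k, element i standing for i+1;
   this shift preserves the order used in w. *)

Definition fox_w (k : nat) (A : {set 'I_k}) : nat :=
  #|[set p : 'I_k * 'I_k | [&& p.1 \in A, p.2 \notin A & (p.2 < p.1)%N]]|.

Definition fox_phi (l k : nat) : int :=
  \sum_(A : {set 'I_k} | #|A| == l) (-1 : int) ^ ((fox_w A)%:Z + (l%:Z - 1)).

(* Main.v *)
Require Import Defs.
From mathcomp Require Import all_boot all_order all_algebra.
From mathcomp Require Import zify.
Set Implicit Arguments. Unset Strict Implicit. Unset Printing Implicit Defensive.
Import GRing.Theory Num.Theory.
Local Open Scope ring_scope.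

Definition fw n (A : {set 'I_n}) : nat :=
  (\sum_(i < n) \sum_(j < n) [&& i \in A, j \notin A & (j < i)%N])%N.

Lemma fox_wE n (A : {set 'I_n}) : fox_w A = fw A.
Proof.
rewrite /fox_w /fw pair_big /= -sum1_card big_mkcond /=.
by apply: eq_bigr => p _; rewrite inE; case: ifP.
Qed.

Definition fB n (B : {set 'I_n}) : {set 'I_n.+1} := [set lift ord0 i | i in B].
Definition gB n (B : {set 'I_n}) : {set 'I_n.+1} := ord0 |: fB B.
Definition hA n (A : {set 'I_n.+1}) : {set 'I_n} := [set i | lift ord0 i \in A].

Lemma mem_fB_lift n (B : {set 'I_n}) i : (lift ord0 i \in fB B) = (i \in B).
Proof. by rewrite mem_imset //; apply: lift_inj. Qed.

Lemma mem_fB0 n (B : {set 'I_n}) : (ord0 \in fB B) = false.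
Proof. by apply/imsetP => -[i _ /eqP]; rewrite (negbTE (neq_lift _ _)). Qed.

Lemma mem_gB_lift n (B : {set 'I_n}) i : (lift ord0 i \in gB B) = (i \in B).
Proof. by rewrite /gB in_setU1 mem_fB_lift eq_sym (negbTE (neq_lift _ _)). Qed.

Lemma mem_gB0 n (B : {set 'I_n}) : (ord0 \in gB B).
Proof. by rewrite /gB setU11. Qed.

Lemma card_fB n (B : {set 'I_n}) : #|fB B| = #|B|.
Proof. by rewrite card_imset //; apply: lift_inj. Qed.

Lemma card_gB n (B : {set 'I_n}) : #|gB B| = #|B|.+1.
Proof. by rewrite /gB cardsU1 mem_fB0 card_fB. Qed.

Lemma hA_fB n (B : {set 'I_n}) : hA (fB B) = B.
Proof. by apply/setP => i; rewrite inE mem_fB_lift. Qed.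

Lemma hA_gB n (B : {set 'I_n}) : hA (gB B) = B.
Proof. by apply/setP => i; rewrite inE mem_gB_lift. Qed.

Lemma fB_hA n (A : {set 'I_n.+1}) : ord0 \notin A -> fB (hA A) = A.
Proof.
move=> H; apply/setP => x; case: (unliftP ord0 x) => [j|] ->.
  by rewrite mem_fB_lift inE.
by rewrite mem_fB0 (negbTE H).
Qed.

Lemma gB_hA n (A : {set 'I_n.+1}) : ord0 \in A -> gB (hA A) = A.
Proof.
move=> H; apply/setP => x; case: (unliftP ord0 x) => [j|] ->.
  by rewrite mem_gB_lift inE.
by rewrite mem_gB0 H.
Qed.

Lemma sum_split n (F : {set 'I_n.+1} -> int) :
  \sum_A F A = \sum_(B : {set 'I_n}) F (fB B) + \sum_(B : {set 'I_n}) F (gB B).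
Proof.
rewrite (bigID (fun A : {set 'I_n.+1} => ord0 \in A)) /= addrC; congr (_ + _).
  rewrite (reindex_onto (@fB n) (@hA n)); last by move=> A; apply: fB_hA.
  by apply: eq_bigl => B; rewrite mem_fB0 hA_fB eqxx.
rewrite (reindex_onto (@gB n) (@hA n)); last by move=> A; apply: gB_hA.
by apply: eq_bigl => B; rewrite mem_gB0 hA_gB eqxx.
Qed.

Lemma sum_card n (B : {set 'I_n}) : (\sum_(i < n) (i \in B : nat))%N = #|B|.
Proof. by rewrite -sum1_card [RHS]big_mkcond /=; apply: eq_bigr => i _; case: (i \in B). Qed.

Lemma fw_fB n (B : {set 'I_n}) : fw (fB B) = (fw B + #|B|)%N.
Proof.
rewrite /fw big_ord_recl /= big1; last by move=> j _; rewrite mem_fB0.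
rewrite add0n -sum_card -big_split /=; apply: eq_bigr => i _.
rewrite big_ord_recl /= mem_fB_lift mem_fB0 /bump /= addnC andbT; congr (_ + _)%N.
by apply: eq_bigr => j _; rewrite !mem_fB_lift /bump /=.
Qed.

Lemma fw_gB n (B : {set 'I_n}) : fw (gB B) = fw B.
Proof.
rewrite /fw big_ord_recl /= big1; last by move=> j _; rewrite mem_gB0 /= ltn0 !andbF.
rewrite add0n; apply: eq_bigr => i _.
rewrite big_ord_recl /= mem_gB_lift mem_gB0 /= andbF add0n.
by apply: eq_bigr => j _; rewrite !mem_gB_lift /bump /=.
Qed.

Definition S (m n : nat) : int :=
  \sum_(A : {set 'I_n} | #|A| == m) (-1) ^+ fw A.

Lemma S_rec m n : S m n.+1 = (-1) ^+ m * S m n + (if m is m'.+1 then S m' n else 0).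
Proof.
rewrite /S big_mkcond sum_split /= mulr_sumr; congr (_ + _).
  rewrite [RHS]big_mkcond; apply: eq_bigr => B _.
  rewrite card_fB fw_fB; case: eqP => [->|] //.
  by rewrite exprD mulrC.
case: m => [|m]; first by rewrite big1 // => B _; rewrite card_gB.
rewrite [RHS]big_mkcond; apply: eq_bigr => B _.
by rewrite card_gB fw_gB eqSS.
Qed.

Lemma S0 m : S m 0 = (m == 0%N)%:R.
Proof.
rewrite /S (eq_bigl (fun A => (A == set0) && (m == 0%N))); last first.
  move=> A; have ->: A = set0 by apply/setP => -[].
  by rewrite eqxx cards0 eq_sym.
case: m => [|m]; last by rewrite big1 // => A /andP[].
rewrite (eq_bigl (pred1 set0)); last by move=> A; rewrite andbT.
rewrite big_pred1_eq /fw big_ord0 //.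
Qed.

Definition F (m n : nat) : int :=
  if odd m && ~~ odd n then 0 else ('C(n./2, m./2))%:R.

Lemma S_F m n : S m n = F m n.
Proof.
elim: n m => [|n IH] m.
  rewrite S0 /F; case: m => [|m] //=.
  by case: m => [|m] //=; case: ifP.
rewrite S_rec; case: m => [|m].
  by rewrite IH /F /= !bin0 mul1r addr0.
rewrite !IH /F /= exprS.
case On: (odd n); case Om: (odd m) => /=.
all: rewrite -signr_odd Om ?uphalf_half ?On ?Om /= ?add1n ?add0n.
all: rewrite ?expr1 ?expr0 ?mulN1r ?opprK ?mul1r ?mulr0 ?addr0 ?add0r ?addNr //.
by rewrite binS natrD.
Qed.

Lemma fw0 n : fw (set0 : {set 'I_n}) = 0%N.
Proof. by rewrite /fw big1 // => i _; rewrite big1 // => j _; rewrite in_set0. Qed.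

Lemma phi0 k : fox_phi 0 k = -1.
Proof.
rewrite /fox_phi (eq_bigl (pred1 set0)); last by move=> A; rewrite cards_eq0.
rewrite big_pred1_eq fox_wE fw0.
by [] || reflexivity.
Qed.

Lemma phiS l k : fox_phi l.+1 k = (-1) ^+ l * S l.+1 k.
Proof.
rewrite /fox_phi /S mulr_sumr; apply: eq_bigr => A _; rewrite fox_wE.
have ->: ((fw A)%:Z + (l.+1%:Z - 1)) = (fw A + l)%N%:Z by rewrite PoszD; lia.
by rewrite -exprnP exprD mulrC.
Qed.

Lemma half_dbl k : (2 * k)./2 = k.
Proof. by rewrite mul2n doubleK. Qed.
Lemma half_dblS k : uphalf (2 * k) = k.
Proof. by rewrite mul2n uphalf_double. Qed.
Lemma odd_dbl k : odd (2 * k) = false.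
Proof. by rewrite mul2n odd_double. Qed.
Lemma odd_dblS k : odd (2 * k).+1 = true.
Proof. by rewrite /= odd_dbl. Qed.

Theorem proposition2p3 :
  (forall l k : nat, odd l -> (l < 2 * k)%N -> fox_phi l (2 * k) = 0) /\
  (forall l k : nat, ~~ odd l -> (l <= 2 * k)%N ->
     fox_phi l (2 * k) = fox_phi l (2 * k).+1) /\
  (forall l k : nat, ~~ odd l -> (l <= 2 * k)%N ->
     fox_phi l.+1 (2 * k).+1 = - fox_phi l (2 * k).+1).
Proof.
split; [|split].
- case=> [//|l] k Hl _.
  by rewrite phiS S_F /F Hl odd_dbl /= mulr0.
- case=> [|l] k Hl _; first by rewrite !phi0.
  rewrite !phiS !S_F /F (negbTE Hl) /= half_dbl half_dblS //.
- case=> [|l] k Hl _.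
  by rewrite phi0 phiS S_F /F odd_dblS /= expr0 mul1r bin0 opprK.
  rewrite !phiS !S_F /F odd_dblS /= andbF.
  have Ol : odd l by move: Hl => /=; rewrite negbK.
  by rewrite andbF half_dblS uphalf_half Ol exprS mulN1r mulNr.
Qed.
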